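(* Let $\Pi=\{P_0,P_1,Q_1,Q_2,Q_3\}$ (five unary relation symbols) and $\mathcal{R}=\{R\}$ (one binary relation symbol). Let $\mathcal{F}$ be the class of all pointed $\mathrm{SB}(\Pi)$-models $(M,w)$ whose domain is finite. Then there exists a $(\Pi,\mathcal{R})$-automaton $A$ that halts in $\mathcal{F}$ and is strongly nonlocal in $\mathcal{F}$.
   Context: Let $\Pi$ be a finite set of unary relation symbols and $\mathcal{R}=\{R_1,\dots,R_k\}$ a finite set of binary relation symbols. A $(\Pi,\mathcal{R})$-model $M$ consists of a nonempty domain $W$ together with interpretations $P^M\subseteq W$ for $P\in\Pi$ and $R_i^M\subseteq W\times W$; a pointed model is a pair $(M,w)$ with $w\in W$. An $\mathrm{SB}(\Pi)$-model is a $(\Pi,\{R\})$-model in which $R^M$ is symmetric and irreflexive. A $(\Pi,\mathcal{R})$-automaton is a tuple $A=(Q,\mathcal{M},\pi,\delta,\mu,F,G)$ where $Q$ (states) and $\mathcal{M}$ (messages) are nonempty finite or countably infinite sets, $\pi:\mathrm{Pow}(\Pi)\to Q$, $\delta:(\mathrm{Pow}(\mathcal{M}))^k\times Q\to Q$, $\mu:Q\times\mathcal{R}\to\mathcal{M}$, $F\subseteq Q$ (accepting states) and $G\subseteq Q\setminus F$ (rejecting states). Run on a model $M$ with domain $W$, it defines configurations $f_n:W\to Q$: $f_0(w)=\pi(\{P\in\Pi: w\in P^M\})$ and $f_{n+1}(w)=\delta((N_1,\dots,N_k),f_n(w))$ where $N_i=\{\mu(f_n(v),R_i): (w,v)\in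 R_i^M\}$. $A$ accepts $(M,w)$ in round $n$ if $f_n(w)\in F$ and $f_m(w)\notin G$ for all $m<n$; $A$ rejects $(M,w)$ in round $n$ if $f_n(w)\in G$ and $f_m(w)\notin F$ for all $m<n$. $A$ accepts (rejects) $(M,w)$ if it does so in some round. For a class $\mathcal{K}$ of pointed models: $A$ converges in $\mathcal{K}$ if it accepts or rejects every $(M,w)\in\mathcal{K}$; $A$ halts in $\mathcal{K}$ if it converges in $\mathcal{K}$ and, for every $(M,w)\in\mathcal{K}$, once $f_n(w)\in F\cup G$ for the first time, $f_m(w)=f_n(w)$ for all $m\ge n$. $A$ specifies a local algorithm in $\mathcal{K}$ if there is $n\in\mathbb{N}$ such that every $(M,w)\in\mathcal{K}$ is accepted or rejected by $A$ in some round $m\le n$. $A$ is strongly nonlocal in $\mathcal{K}$ if there is no $(\Pi,\mathcal{R})$-automaton $B$ that specifies a local algorithm in $\mathcal{K}$ and accepts exactly the same pointed models in $\mathcal{K}$ as $A$. *)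

(* Defs.v *)
From mathcomp Require Import all_boot.
From Stdlib Require Import List.

Set Implicit Arguments.
Unset Strict Implicit.
Unset Printing Implicit Defensive.

Record model (np k : nat) (W : Type) := Model {
  mP : 'I_np -> pred W;
  mR : 'I_k -> rel W
}.

(* Q and M are countable (finite or countably infinite)
   types; they are automatically nonempty (pi and mu produce elements).
   Pow(M) is represented by M -> Prop, and (Pow M)^k by 'I_k -> (M -> Prop). *)
Record automaton (np k : nat) := Automaton {
  aQ : countType;
  aM : countType;
  api : {set 'I_np} -> aQ;
  adelta : ('I_k -> (aM -> Prop)) -> aQ -> aQ;
  amu : aQ -> 'I_k -> aM;
  aF : aQ -> Prop;
  aG : aQ -> Prop;
  aGF : forall q, aG q -> ~ aF q
}.

Arguments api {np k} _ _.
Arguments adelta {np k} _ _ _.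
Arguments amu {np k} _ _ _.
Arguments aF {np k} _ _.
Arguments aG {np k} _ _.
Arguments mP {np k W} _ _ _.
Arguments mR {np k W} _ _ _ _.

Fixpoint config np k (A : automaton np k) W (M : model np k W) (n : nat)
  : W -> aQ A :=
  match n with
  | 0 => fun w => api A [set i | mP M i w]
  | n'.+1 => fun w =>
      adelta A
        (fun i m => exists v, mR M i w v /\ amu A (config A M n' v) i = m)
        (config A M n' w)
  end.

Definition accepts_in np k (A : automaton np k) W (M : model np k W) (w : W)
  (n : nat) : Prop :=
  aF A (config A M n w) /\ forall m, m < n -> ~ aG A (config A M m w).

Definition rejects_in np k (A : automaton np k) W (M : model np k W) (w : W)
  (n : nat) : Prop :=
  aG A (config A M n w) /\ forall m, m < n -> ~ aF A (config A M m w).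

Definition accepts np k (A : automaton np k) W (M : model np k W) (w : W) :=
  exists n, accepts_in A M w n.

Definition rejects np k (A : automaton np k) W (M : model np k W) (w : W) :=
  exists n, rejects_in A M w n.

Definition mclass (np k : nat) := forall W : Type, model np k W -> W -> Prop.

Definition converges np k (A : automaton np k) (K : mclass np k) : Prop :=
  forall W (M : model np k W) (w : W), K W M w -> accepts A M w \/ rejects A M w.

Definition halts np k (A : automaton np k) (K : mclass np k) : Prop :=
  converges A K /\
  forall W (M : model np k W) (w : W), K W M w ->
    forall n, (aF A (config A M n w) \/ aG A (config A M n w)) ->
      (forall m, m < n -> ~ (aF A (config A M m w) \/ aG A (config A M m w))) ->
      forall m, n <= m -> config A M m w = config A M n w.

Definition specifies_local np k (A : automaton np k) (K : mclass np k) : Prop :=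
  exists n, forall W (M : model np k W) (w : W), K W M w ->
    exists m, m <= n /\ (accepts_in A M w m \/ rejects_in A M w m).

Definition strongly_nonlocal np k (A : automaton np k) (K : mclass np k) : Prop :=
  ~ exists B : automaton np k,
      specifies_local B K /\
      forall W (M : model np k W) (w : W), K W M w -> (accepts A M w <-> accepts B M w).

Definition SB_model np W (M : model np 1 W) : Prop :=
  (forall x y, mR M ord0 x y -> mR M ord0 y x) /\ (forall x, ~~ mR M ord0 x x).

Definition finite_type (W : Type) : Prop := exists l : list W, forall x, In x l.

Definition finite_SB_class (np : nat) : mclass np 1 :=
  fun W M w => SB_model M /\ finite_type W.
Arguments finite_SB_class np : clear implicits.

(* Main.v *)
Require Import Defs.
From Stdlib Require Import List.
From mathcomp Require Import all_boot.
From mathcomp Require Import boolp.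
From mathcomp Require Import zify.
Set Implicit Arguments.
Unset Strict Implicit.
Unset Printing Implicit Defensive.


Definition pd (k : nat) : bool := odd (logn 2 k).

Lemma pd_double j : 0 < j -> pd (j.*2) = ~~ pd j.
Proof.
move=> j0; rewrite /pd (lognE 2 j.*2) /=.
have -> : (0 < j.*2) by rewrite double_gt0.
have -> : (2 %| j.*2) by rewrite -muln2 dvdn_mull.
by rewrite /= -muln2 mulnK.
Qed.

Lemma pd_odd k : odd k -> pd k = false.
Proof.
move=> ok; rewrite /pd lognE.
have -> : (2 %| k) = false by rewrite dvdn2 ok.
by rewrite !andbF.
Qed.

Lemma pd_2mod4 k : k %% 4 = 2 -> pd k.
Proof.
move=> h.
have e : k = (k %/ 2).*2 by rewrite -muln2; lia.
rewrite e.
rewrite pd_double; last by lia.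
by rewrite pd_odd //; apply/negPn; lia.
Qed.

Lemma pd_noper p : 0 < p -> forall s, 0 < s ->
  ~ (forall t, t < 8 * p -> pd (s + t) = pd (s + t + p)).
Proof.
elim/ltn_ind: p => p IH p0 s s0 H.
case/boolP: (odd p) => op.
  pose t := (6 - s %% 4) %% 4.
  have ht : t < 8 * p by rewrite /t; lia.
  have := H t ht.
  rewrite pd_2mod4; last by rewrite /t; lia.
  rewrite pd_odd //; rewrite oddD op /=.
  have : (s + t) %% 4 = 2 by rewrite /t; lia.
  move=> h4; apply/negP; move: h4; lia.
pose q := p %/ 2.
have pq : p = q.*2 by rewrite /q; lia.
have q0 : 0 < q by lia.
apply: (IH q _ q0 (s.+1 %/ 2)) => //; first by lia.
  by lia.
move=> t ht.
have ht' : (s.+1 %/ 2 + t).*2 - s < 8 * p by rewrite -muln2; lia.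
have := H _ ht'.
rewrite subnKC; last by rewrite -muln2; lia.
rewrite pq -doubleD.
rewrite (pd_double (j := s.+1 %/ 2 + t)); last by lia.
rewrite (pd_double (j := s.+1 %/ 2 + t + q)); last by lia.
by move/negb_inj.
Qed.


Notation letter := {set 'I_5}.
Definition word := seq letter.

Fixpoint allw (n : nat) : seq word :=
  match n with
  | 0 => [:: [::]]
  | n'.+1 => [seq a :: y | a <- enum {: letter}, y <- allw n']
  end.

Arguments allw : simpl never.

Lemma mem_allw n y : (y \in allw n) = (size y == n).
Proof.
elim: n y => [|n IH] [|a y] //=.
- by apply/negbTE/negP => /allpairsP [[b z]] [].
- rewrite eqSS -IH; apply/allpairsP/idP.
  + by case=> [[b z]] /= [_ hz [e1 e2]]; subst.
  + move=> h; exists (a, y); split => //; by rewrite mem_enum.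
Qed.

Definition badw (y : word) : bool :=
  has (fun p => has (fun i => has (fun l => (9 * p <= l) && (i + l <= size y) &&
     all (fun t => nth set0 y (i + t) == nth set0 y (i + t + p)) (iota 0 (l - p)))
     (iota 0 (size y).+1)) (iota 0 (size y).+1)) (iota 1 (size y)).

Lemma badwP y : badw y <-> exists p i l, [/\ 0 < p, 9 * p <= l, i + l <= size y &
   forall t, t < l - p -> nth set0 y (i + t) = nth set0 y (i + t + p)].
Proof.
split.
- case/hasP => p; rewrite mem_iota => /andP [p1 _].
  case/hasP => i _; case/hasP => l _ /andP [/andP [h1 h2] /allP h3].
  exists p, i, l; split => // t ht; apply/eqP/h3; rewrite mem_iota; lia.
- case=> p [i [l [p0 h1 h2 h3]]].
  apply/hasP; exists p; first by rewrite mem_iota; lia.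
  apply/hasP; exists i; first by rewrite mem_iota; lia.
  apply/hasP; exists l; first by rewrite mem_iota; lia.
  rewrite h1 h2 /=; apply/allP => t; rewrite mem_iota => ht.
  apply/eqP/h3; lia.
Qed.

Lemma badw_cons a y : badw y -> badw (a :: y).
Proof.
case/badwP => p [i [l [p0 h1 h2 h3]]]; apply/badwP; exists p, i.+1, l; split => //=.
Qed.

Definition p0 : 'I_5 := @Ordinal 5 0 isT.
Definition q1 : 'I_5 := @Ordinal 5 2 isT.
Definition q2 : 'I_5 := @Ordinal 5 3 isT.
Definition q3 : 'I_5 := @Ordinal 5 4 isT.

Definition colr (l : letter) : nat :=
  if q1 \in l then 0 else if q2 \in l then 1 else if q3 \in l then 2 else 3.

Definition fwd (a b : letter) : bool := (colr a < 3) && (colr b == (colr a).+1 %% 3).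

Definition newstat (n : nat) (S : seq word) : nat :=
  if has badw S then 2 else if nilp S then (if odd n then 2 else 1) else 0.

Definition Qt : countType := Countable.clone (letter * nat * nat * seq word)%type _.

Definition slab (q : Qt) : letter := q.1.1.1.
Definition sstat (q : Qt) : nat := q.1.1.2.
Definition sn (q : Qt) : nat := q.1.2.
Definition sS (q : Qt) : seq word := q.2.

Definition Api (l : {set 'I_5}) : Qt := (l, 0, 0, [:: [:: l]]).

Definition Adelta (P : 'I_1 -> Qt -> Prop) (q : Qt) : Qt :=
  if sstat q != 0 then q else
  let S' := [seq y <- allw (sn q).+2 | `[< exists m y', P ord0 m /\ fwd (slab q) (slab m)
                  /\ y' \in sS m /\ y = slab q :: y' >]] in
  (slab q, newstat (sn q).+1 S', (sn q).+1, S').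

Definition AF (q : Qt) : Prop := sstat q = 1.
Definition AG (q : Qt) : Prop := 1 < sstat q.
Lemma AGF q : AG q -> ~ AF q.
Proof. by rewrite /AG /AF => h e; rewrite e in h. Qed.

Definition A : automaton 5 1 :=
  @Automaton 5 1 Qt Qt Api Adelta (fun q _ => q) AF AG AGF.


Definition labm W (M : model 5 1 W) (v : W) : letter := [set i | mP M i v].
Definition fR W (M : model 5 1 W) : rel W :=
  fun a b => mR M ord0 a b && fwd (labm M a) (labm M b).
Definition WW W (M : model 5 1 W) n v (y : word) : Prop :=
  exists s : seq W, [/\ size s = n, path (fR M) v s & y = map (labm M) (v :: s)].

Lemma WW_size W (M : model 5 1 W) n v y : WW M n v y -> size y = n.+1.
Proof. by case=> s [<- _ ->]; rewrite /= size_map. Qed.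

Lemma WW_cons W (M : model 5 1 W) n v u y : fR M v u -> WW M n u y ->
  WW M n.+1 v (labm M v :: y).
Proof. by move=> h [s [<- hp ->]]; exists (u :: s); rewrite /= h hp. Qed.

Lemma WW_inv W (M : model 5 1 W) n v y : WW M n.+1 v y ->
  exists u y', [/\ fR M v u, WW M n u y' & y = labm M v :: y'].
Proof.
case=> [[|u s]] [//= [hs] /andP [h1 h2] ->].
by exists u, (map (labm M) (u :: s)); split => //; exists s.
Qed.

Lemma WW_prefix W (M : model 5 1 W) n v y t : WW M n v y -> t <= n -> exists z, WW M t v z.
Proof.
case=> s [hs hp _] ht; exists (map (labm M) (v :: take t s)), (take t s); split => //.
  by rewrite size_takel // hs.
by apply: take_path.
Qed.

Lemma WW0 W (M : model 5 1 W) v y : WW M 0 v y <-> y = [:: labm M v].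
Proof.
split; first by case=> s [hs _ ->]; case: s hs.
by move=> ->; exists [::].
Qed.

Notation cf M n v := (config A M n v).

Lemma cfS W (M : model 5 1 W) n v : cf M n.+1 v =
  Adelta (fun i m => exists u, mR M i v u /\ cf M n u = m) (cf M n v).
Proof. by []. Qed.

Lemma slab_cf W (M : model 5 1 W) n v : slab (cf M n v) = labm M v.
Proof.
elim: n => [//|n IH]; rewrite cfS /Adelta.
by case: ifP.
Qed.

Lemma frozen W (M : model 5 1 W) n v : sstat (cf M n v) != 0 -> cf M n.+1 v = cf M n v.
Proof. by move=> h; rewrite cfS /Adelta h. Qed.

Lemma frozen_le W (M : model 5 1 W) n m v : sstat (cf M n v) != 0 -> n <= m ->
  cf M m v = cf M n v.
Proof.
move=> h; elim: m => [|m IH]; first by rewrite leqn0 => /eqP ->.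
rewrite leq_eqVlt => /orP [/eqP <- //|hm].
by rewrite frozen IH //; rewrite IH.
Qed.

Lemma cf_step W (M : model 5 1 W) n v : sstat (cf M n v) = 0 ->
  [/\ sstat (cf M n.+1 v) = newstat (sn (cf M n v)).+1 (sS (cf M n.+1 v)),
      sn (cf M n.+1 v) = (sn (cf M n v)).+1 &
   forall y, y \in sS (cf M n.+1 v) <-> size y = (sn (cf M n v)).+2 /\
     exists u y', [/\ fR M v u, y' \in sS (cf M n u) & y = labm M v :: y']].
Proof.
move=> h0; rewrite cfS /Adelta h0 eqxx /=; split => // y.
rewrite mem_filter mem_allw; split.
- case/andP => /asboolP [m [y' [[u [hu <-]] [hf [hy ->]]]]] /eqP hs.
  split => //; exists u, y'; split => //; last by rewrite slab_cf.
  by rewrite /fR hu /= -(slab_cf M n v) -(slab_cf M n u).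
- case=> hs [u [y' [/andP [hu hf] hy ey]]]; subst y.
  rewrite hs eqxx andbT; apply/asboolP.
  exists (cf M n u), y'; split; first by exists u.
  by rewrite !slab_cf.
Qed.

Definition alive W (M : model 5 1 W) n v := forall m, m < n -> sstat (cf M m v) = 0.

Lemma inv W (M : model 5 1 W) N : forall n v, n <= N -> alive M n v ->
  sn (cf M n v) = n /\ forall y, y \in sS (cf M n v) <-> WW M n v y.
Proof.
elim: N => [|N IH] [|n] v hn hal.
- split => // y; rewrite WW0 /= inE; split; by [move/eqP|move->].
- by [].
- split => // y; rewrite WW0 /= inE; split; by [move/eqP|move->].
have hal' : alive M n v by move=> m hm; apply: hal; lia.
have [sn_n HS] := IH n v hn hal'.
have [hst hsn hmem] := cf_step (hal n (ltnSn n)).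
rewrite hsn sn_n; split => // y; rewrite hmem sn_n; split.
- case=> hs [u [y' [hf hy ey]]]; subst y.
  apply: (WW_cons hf).
  case/boolP: [forall m : 'I_n, sstat (cf M m u) == 0] => hau.
    have halu : alive M n u by move=> m hm; apply/eqP/(forallP hau (Ordinal hm)).
    by have [_ <-] := IH n u hn halu.
  exfalso.
  case/forallPn: hau => m0 hm0.
  pose P := fun m => (m < n) && (sstat (cf M m u) != 0).
  have exP : exists m, P m by exists m0; rewrite /P ltn_ord hm0.
  case: (ex_minnP exP) => t /andP [htn htu] htmin.
  have halt : alive M t u.
    by move=> m hm; apply/eqP; apply/negP=> /negP hc; have := htmin m; rewrite /P hc andbT; lia.
  have [snt HSt] := IH t u (leq_trans (ltnW htn) hn) halt.
  rewrite (frozen_le htu (ltnW htn)) HSt in hy.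
  have h1 := WW_size hy; move: hs; rewrite /= h1; lia.
- move=> hW; split; first by have := WW_size hW.
  have [u [y' [hf hW' ->]]] := WW_inv hW.
  exists u, y'; split => //.
  case/boolP: [forall m : 'I_n, sstat (cf M m u) == 0] => hau.
    have halu : alive M n u by move=> m hm; apply/eqP/(forallP hau (Ordinal hm)).
    by have [_ ->] := IH n u hn halu.
  exfalso.
  case/forallPn: hau => m0 hm0.
  pose P := fun m => (m < n) && (sstat (cf M m u) != 0).
  have exP : exists m, P m by exists m0; rewrite /P ltn_ord hm0.
  case: (ex_minnP exP) => t /andP [htn htu] htmin.
  have halt : alive M t u.
    by move=> m hm; apply/eqP; apply/negP=> /negP hc; have := htmin m; rewrite /P hc andbT; lia.
  have [snt HSt] := IH t u (leq_trans (ltnW htn) hn) halt.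
  case: t htn htu htmin halt snt HSt => [|t] htn htu htmin halt snt HSt.
    by move: htu; rewrite /=.
  have hst' := cf_step (halt t (ltnSn t)).
  case: hst' => hstu _ _.
  have [z hz] := WW_prefix hW' (ltnW htn).
  move: htu; rewrite hstu /newstat.
  have hzin : z \in sS (cf M t.+1 u) by rewrite HSt.
  case: ifP => hb.
  + move=> _; case/hasP: hb => z' hz' hbz'.
    rewrite HSt in hz'.
    have hvt : alive M t.+2 v by move=> m hm; apply: hal; lia.
    have htN : t.+2 <= N by lia.
    have [sn2 HS2] := IH t.+2 v htN hvt.
    have ht1 : t.+1 < n.+1 by lia.
    have hv := cf_step (hal t.+1 ht1).
    case: hv => hstv _ _.
    have : sstat (cf M t.+2 v) = 0 by apply: hal; lia.
    rewrite hstv /newstat.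
    have -> : has badw (sS (cf M t.+2 v)).
      apply/hasP; exists (labm M v :: z'); last by apply: badw_cons.
      by rewrite HS2; apply: WW_cons hf hz'.
    by [].
  + case: ifP => hnil //.
    by move: hnil hzin; case: (sS (cf M t.+1 u)).
Qed.


Lemma path_iota T (e : rel T) (F : nat -> T) : (forall k, e (F k) (F k.+1)) ->
  forall m a, path e (F a) (map F (iota a.+1 m)).
Proof. by move=> h; elim=> [//|m IH] a /=; rewrite h IH. Qed.

Definition pumph (i j y : nat) := if y.+1 == j then i else y.+1.

Lemma pump_iter (i j : nat) : i < j ->
  let h := pumph i j in
  [/\ (forall k, iter k h 0 < j), iter 0 h 0 = 0 &
      forall t, iter (i + t + (j - i)) h 0 = iter (i + t) h 0].
Proof.
move=> ij h.
have g1 : forall k, k <= i -> iter k h 0 = k.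
  elim=> [//|k IH] hk; rewrite iterS IH; last by lia.
  by rewrite /h /pumph; case: eqP => //; lia.
have g2 : forall t, t < j - i -> iter (i + t) h 0 = i + t.
  elim=> [|t IH] ht; first by rewrite addn0 g1.
  rewrite addnS iterS IH; last by lia.
  by rewrite /h /pumph; case: eqP => //; lia.
have g3 : iter (i + (j - i)) h 0 = i.
  have -> : i + (j - i) = (i + (j - i - 1)).+1 by lia.
  rewrite iterS g2; last by lia.
  by rewrite /h /pumph; case: eqP => //; lia.
split => //.
- elim=> [|k IH]; first by rewrite /=; lia.
  rewrite iterS {1}/h /pumph; case: eqP => hh //; clearbody h; lia.
- elim=> [|t IH]; first by rewrite !addn0 g3 g1.
  have -> : i + t.+1 + (j - i) = (i + t + (j - i)).+1 by lia.
  by rewrite iterS IH addnS iterS.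
Qed.

Lemma size_length T (l : seq T) : size l = List.length l.
Proof. by elim: l => //= a l ->. Qed.

Lemma In_ix W (l : seq W) (v : W) : (forall x, List.In x l) ->
  exists ix : W -> nat, (forall x, ix x < size l) /\ (forall a b, ix a = ix b -> a = b).
Proof.
move=> hl.
have H x : exists k, k < size l /\ List.nth k l v = x.
  have [k [hk e]] := List.In_nth l x v (hl x); exists k; split => //.
  by rewrite size_length; apply/ltP.
exists (fun x => proj1_sig (cid (H x))); split.
  by move=> x; destruct (cid (H x)) as [k [hk ek]].
move=> a b /=; destruct (cid (H a)) as [ka [hka ea]]; destruct (cid (H b)) as [kb [hkb eb]] => /= e.
by rewrite -ea -eb e.
Qed.

Lemma halting W (M : model 5 1 W) v : finite_type W -> exists n, sstat (cf M n v) != 0.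
Proof.
move=> [l hl].
case: (pselect (exists n, sstat (cf M n v) != 0)) => // H.
have H0 n : sstat (cf M n v) = 0.
  by apply/eqP/negPn/negP => h; apply: H; exists n.
have hal n : alive M n v by move=> m _; exact: H0 m.
have [ix [hix hinj]] := In_ix v hl.
set N := size l.
have N0 : 0 < N by have := hix v; rewrite -/N; lia.
have [_ HS] := inv (leqnn N) (hal N).
have [y hy] : exists y, y \in sS (cf M N v).
  case: N N0 HS => [//|N'] _ HS.
  have [sn' _] := inv (leqnn N') (hal N').
  have [hst _ _] := cf_step (H0 N').
  move: (H0 N'.+1); rewrite hst /newstat sn'.
  case: (sS (cf M N'.+1 v)) => [|y S]; first by case: (odd _).
  by move=> _; exists y; exact: mem_head.
have [s [hs hp _]] := (HS y).1 hy.
pose x k := nth v (v :: s) k.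
have hE : forall k, k < N -> fR M (x k) (x k.+1).
  by move=> k hk; move/(pathP v): hp; apply; rewrite hs.
have : ~~ uniq (map ix (v :: s)).
  apply/negP => hu.
  have hsub : {subset map ix (v :: s) <= iota 0 N}.
    have hall : all (fun z => z < N) (map ix (v :: s)).
      by elim: (v :: s) => //= a t ->; rewrite hix.
    by move=> z hz; rewrite mem_iota /=; apply: (allP hall).
  by have := uniq_leq_size hu hsub; rewrite size_map /= hs size_iota ltnn.
case/(uniqPn 0) => i [j [ij]]; rewrite size_map /= hs => jlt.
move=> e; change (nth 0 (map ix (v :: s)) i = nth 0 (map ix (v :: s)) j) in e.
rewrite (nth_map v) in e; last by rewrite /= hs; lia.
rewrite (nth_map v) in e; last by rewrite /= hs; lia.
have hij : x i = x j := hinj _ _ e.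
have [glt g0 gper] := pump_iter ij.
pose F k := x (iter k (pumph i j) 0).
have hedge k : fR M (F k) (F k.+1).
  rewrite /F iterS; set z := iter k _ 0.
  have zj : z < j := glt k.
  rewrite /pumph; case: eqP => e1.
    by rewrite hij -e1; apply: hE; lia.
  by apply: hE; lia.
set c := j - i.
set Ml := i + 9 * c.
pose s' := map F (iota 1 Ml).
have hW : WW M Ml v (map (labm M) (v :: s')).
  exists s'; split => //; first by rewrite size_map size_iota.
  exact: (path_iota hedge Ml 0).
have ey : map (labm M) (v :: s') = map (fun k => labm M (F k)) (iota 0 Ml.+1).
  by rewrite /= /s' -map_comp.
have hb : badw (map (labm M) (v :: s')).
  rewrite ey; apply/badwP; exists c, i, (9 * c); split.
  - by rewrite /c; lia.
  - by [].
  - by rewrite size_map size_iota /Ml; lia.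
  move=> t ht.
  rewrite !(nth_map 0) ?size_iota; [|rewrite /Ml; lia|rewrite /Ml; lia].
  rewrite !nth_iota; [|rewrite /Ml; lia|rewrite /Ml; lia].
  by rewrite !add0n /F /c gper.
have [_ HSM] := inv (leqnn Ml) (hal Ml).
have hin := (HSM _).2 hW.
have eM : Ml = (Ml.-1).+1 by rewrite /Ml /c; lia.
have [hst _ _] := cf_step (H0 Ml.-1).
move: (H0 Ml.-1.+1); rewrite hst /newstat -eM.
by have -> : has badw (sS (cf M Ml v)) by apply/hasP; exists (map (labm M) (v :: s')).
Qed.


Definition colidx (k : nat) : 'I_5 :=
  match k %% 3 with 0 => q1 | 1 => q2 | _ => q3 end.
Definition plab (k : nat) (i : 'I_5) : bool := (i == colidx k) || ((i == p0) && pd k.+1).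
Definition PM (L : nat) : model 5 1 'I_L.+1 :=
  @Model 5 1 'I_L.+1 (fun i (k : 'I_L.+1) => plab k i)
    (fun _ (a b : 'I_L.+1) => (a.+1 == b :> nat) || (b.+1 == a :> nat)).

Lemma PM_class L w : finite_SB_class 5 _ (PM L) w.
Proof.
split; first split.
- by move=> x y /=; rewrite orbC.
- by move=> x /=; rewrite !(gtn_eqF (ltnSn _)).
exists (enum 'I_L.+1) => x.
have : x \in enum 'I_L.+1 by rewrite mem_enum.
elim: (enum 'I_L.+1) => //= a s IH; rewrite inE => /orP [/eqP ->|h]; [by left|right; auto].
Qed.

Lemma colr_plab k : colr [set i | plab k i] = k %% 3.
Proof.
rewrite /colr !inE /plab /colidx.
have : k %% 3 < 3 by rewrite ltn_mod.
by case: (k %% 3) => [|[|[|]]].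
Qed.

Lemma p0_plab k : (p0 \in [set i | plab k i]) = pd k.+1.
Proof.
rewrite inE /plab /colidx.
have : k %% 3 < 3 by rewrite ltn_mod.
by case: (k %% 3) => [|[|[|]]].
Qed.

Lemma labm_PM L (a : 'I_L.+1) : labm (PM L) a = [set i | plab a i].
Proof. by []. Qed.

Lemma fR_PM L (a b : 'I_L.+1) : fR (PM L) a b = (b == a.+1 :> nat).
Proof.
rewrite /fR /fwd !labm_PM !colr_plab /=.
apply/idP/idP.
- case/andP => /orP [/eqP <-|/eqP e] //; rewrite -e => /andP [_ /eqP].
  by lia.
- move/eqP => e; rewrite e eqxx /=; apply/andP; split; first by lia.
  by apply/eqP; lia.
Qed.

Lemma path_PM L (a : 'I_L.+1) s : path (fR (PM L)) a s ->
  forall t, t < size s -> val (nth a s t) = a + t.+1.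
Proof.
elim: s a => [//|b s IH] a /= /andP [hab hp] [|t] ht /=.
  by rewrite fR_PM in hab; move/eqP: hab => ->; lia.
rewrite fR_PM in hab; move/eqP: hab => hab; rewrite ltnS in ht.
rewrite (set_nth_default b); last by lia.
rewrite IH //; lia.
Qed.

Lemma WW_PM_p0 L n y : WW (PM L) n ord0 y ->
  forall k, k <= n -> (p0 \in nth set0 y k) = pd k.+1.
Proof.
case=> s [hs hp ->] k hk.
rewrite (nth_map ord0) /=; last by lia.
case: k hk => [|k] hk; first by rewrite labm_PM p0_plab.
rewrite labm_PM p0_plab /= path_PM; [by [] | by [] | lia].
Qed.

Lemma WW_PM_nobad L n y : WW (PM L) n ord0 y -> ~~ badw y.
Proof.
move=> hW; apply/negP => /badwP [p [i [l [hp h1 h2 h3]]]].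
have hs := WW_size hW.
apply: (pd_noper hp (s := i.+1)) => //.
move=> t ht.
have e := h3 t (ltac:(lia)).
have := WW_PM_p0 hW (k := i + t) (ltac:(lia)).
have := WW_PM_p0 hW (k := i + t + p) (ltac:(lia)).
rewrite -e => -> ->.
by rewrite !addSn.
Qed.

Lemma path_iota_b T (e : rel T) (F : nat -> T) m a :
  (forall k, a <= k -> k < a + m -> e (F k) (F k.+1)) ->
  path e (F a) (map F (iota a.+1 m)).
Proof.
elim: m a => [//|m IH] a h /=; rewrite h ?IH //; try lia.
by move=> k h1 h2; apply: h; lia.
Qed.

Lemma WW_PM_ex L n : n <= L -> exists y, WW (PM L) n ord0 y.
Proof.
move=> hn.
pose F k : 'I_L.+1 := inord k.
exists (map (labm (PM L)) (F 0 :: map F (iota 1 n))), (map F (iota 1 n)).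
split.
- by rewrite size_map size_iota.
- have -> : (ord0 : 'I_L.+1) = F 0 by apply: val_inj; rewrite /F /= inordK.
  apply: path_iota_b => k _ hk.
  by rewrite fR_PM /F !inordK //; lia.
- by have -> : (ord0 : 'I_L.+1) = F 0 by apply: val_inj; rewrite /F /= inordK.
Qed.

Lemma WW_PM_none L y : ~ WW (PM L) L.+1 ord0 y.
Proof.
case=> s [hs hp _].
have e := path_PM hp (t := L) (ltac:(lia)); rewrite /= in e.
have := ltn_ord (nth ord0 s L); lia.
Qed.


Lemma PM_alive L : forall n, n <= L.+1 -> alive (PM L) n ord0.
Proof.
elim=> [|n IH] hn; first by move=> m.
have haln := IH (ltnW hn).
move=> m; rewrite ltnS leq_eqVlt => /orP [/eqP ->|hm]; last by apply: haln.
case: n IH hn haln => [|n] IH hn haln; first by [].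
have [hst _ _] := cf_step (haln n (ltnSn n)).
have haln' : alive (PM L) n ord0 by move=> r hr; apply: haln; lia.
have [snn _] := inv (leqnn n) haln'.
have [_ HS] := inv (leqnn n.+1) haln.
rewrite hst snn /newstat.
have -> : has badw (sS (cf (PM L) n.+1 ord0)) = false.
  apply/negbTE/hasP => [[z hz hb]].
  by have := WW_PM_nobad ((HS z).1 hz); rewrite hb.
have [y hy] := WW_PM_ex (ltac:(lia) : n.+1 <= L).
have := (HS y).2 hy.
by case: (sS (cf (PM L) n.+1 ord0)).
Qed.

Lemma PM_final L : sstat (cf (PM L) L.+1 ord0) = (if odd L.+1 then 2 else 1).
Proof.
have hal := PM_alive (leqnn L.+1).
have [hst _ _] := cf_step (hal L (ltnSn L)).
have halL : alive (PM L) L ord0 by move=> r hr; apply: hal; lia.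
have [snn _] := inv (leqnn L) halL.
have [_ HS] := inv (leqnn L.+1) hal.
rewrite hst snn.
case e: (sS (cf (PM L) L.+1 ord0)) => [//|z S].
have : z \in sS (cf (PM L) L.+1 ord0) by rewrite e mem_head.
by move/HS/WW_PM_none.
Qed.

Lemma rej_not_acc np k (B : automaton np k) W (M : model np k W) w n :
  rejects_in B M w n -> ~ accepts B M w.
Proof.
case=> hG hnF [m [hF hnG]].
case: (ltngtP m n) => h.
- by apply: (hnF m h).
- by apply: (hnG n h).
- by subst; apply: (aGF hG).
Qed.

Lemma A_acc L : accepts A (PM L) ord0 <-> ~~ odd L.+1.
Proof.
have hal := PM_alive (leqnn L.+1).
have hfin := PM_final L.
case: (boolP (odd L.+1)) => ho.
- rewrite ho in hfin; split => // hacc; exfalso; apply: (rej_not_acc (n := L.+1)) hacc.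
  split; first by rewrite /= /AG hfin.
  by move=> m hm; rewrite /= /AF hal.
- rewrite (negbTE ho) in hfin; split => // _; exists L.+1; split; first by rewrite /= /AF hfin.
  by move=> m hm; rewrite /= /AG hal.
Qed.

Lemma transfer np k (B : automaton np k) W1 W2 (M1 : model np k W1) (M2 : model np k W2)
  w1 w2 m : (forall r, r <= m -> config B M1 r w1 = config B M2 r w2) ->
  (accepts_in B M1 w1 m -> accepts_in B M2 w2 m) /\
  (rejects_in B M1 w1 m -> rejects_in B M2 w2 m).
Proof.
move=> h; split.
- case=> h1 h2; split; first by rewrite -h.
  by move=> r hr; rewrite -h; [apply: h2|lia].
- case=> h1 h2; split; first by rewrite -h.
  by move=> r hr; rewrite -h; [apply: h2|lia].
Qed.

Lemma loc (B : automaton 5 1) L m : forall (a : 'I_L.+1) (b : 'I_L.+2),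
  (a : nat) = b -> a + m <= L ->
  config B (PM L) m a = config B (PM L.+1) m b.
Proof.
elim: m => [|m IH] a b eab ham.
  by rewrite /= eab.
rewrite /= (IH a b eab); last by lia.
congr (adelta B _ _).
apply: funext => i; apply: funext => q; apply: propext; split.
- case=> v [hR e].
  have hv : (v : nat) < L.+2 by have := ltn_ord v; lia.
  exists (Ordinal hv); split.
    by move: hR; rewrite /= -eab.
  rewrite -e -(IH v) //.
  by move: hR => /= /orP [/eqP|/eqP]; lia.
- case=> v [hR e].
  have hv : (v : nat) < L.+1 by move: hR => /= /orP [/eqP|/eqP]; lia.
  exists (Ordinal hv); split.
    by move: hR; rewrite /= -eab.
  rewrite -e (IH (Ordinal hv) v) //=.
  by move: hR => /= /orP [/eqP|/eqP]; lia.
Qed.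

Theorem theorem3p1 :
  exists A : automaton 5 1,
    halts A (finite_SB_class 5) /\ strongly_nonlocal A (finite_SB_class 5).
Proof.
exists A; split.
- split.
  + move=> W M w [_ hfin].
    have exP : exists n, sstat (cf M n w) != 0 := @halting _ M w hfin.
    case: (ex_minnP exP) => n hn hmin.
    have hpre : forall m, m < n -> sstat (cf M m w) = 0.
      move=> m hm; apply/eqP; apply/negP => /negP h.
      by have := hmin m h; lia.
    case e: (sstat (cf M n w)) hn => [//|[|s]] _.
    * left; exists n; split => //.
      by move=> m hm; rewrite /= /AG hpre.
    * right; exists n; split; first by rewrite /= /AG e.
      by move=> m hm; rewrite /= /AF hpre.
  + move=> W M w _ n hn _ m hm.
    apply: frozen_le => //.
    by case: hn; rewrite /= /AF /AG => h; apply/eqP => h'; rewrite h' in h.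
- move=> [B [[N HN] Hacc]].
  have hconf : forall r, r <= N ->
      config B (PM N) r ord0 = config B (PM N.+1) r ord0.
    by move=> r hr; apply: loc.
  have hB : accepts B (PM N) ord0 <-> accepts B (PM N.+1) ord0.
    have [m [hm [ha|hr]]] := HN _ (PM N) ord0 (@PM_class N ord0).
    + have [t1 _] := transfer (m := m) (fun r hr => hconf r (leq_trans hr hm)).
      by split => _; [exists m; apply: t1 | exists m].
    + have [_ t2] := transfer (m := m) (fun r hr => hconf r (leq_trans hr hm)).
      split => h; exfalso.
      * exact: rej_not_acc hr h.
      * exact: rej_not_acc (t2 hr) h.
  have h1 := Hacc _ (PM N) ord0 (@PM_class N ord0).
  have h2 := Hacc _ (PM N.+1) ord0 (@PM_class N.+1 ord0).
  have := A_acc N; have := A_acc N.+1.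
  have e : accepts A (PM N) ord0 <-> accepts A (PM N.+1) ord0.
    by split => h; [apply/h2/hB/h1 | apply/h1/hB/h2].
  rewrite /=.
  case: (odd N) => /= a2 a1.
  + by have := (proj1 a2) ((proj1 e) ((proj2 a1) isT)).
  + by have := (proj1 a1) ((proj2 e) ((proj2 a2) isT)).
Qed.
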